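(* For every integer $a\geq 3$ and every integer $m\geq 2a^2-a+2$, the 2-color Rado number of the equation $L(m,a)$ equals $C(m,a)=\left\lceil \frac{m-1}{a}\left\lceil \frac{m-1}{a}\right\rceil\right\rceil$.
   Context: For integers $m\geq 3$, $a\geq 1$, $L(m,a)$ denotes the equation $x_1+x_2+\cdots+x_{m-1}=a x_m$. For a positive integer $n$, $[n]=\{1,\dots,n\}$. A solution of $L(m,a)$ in $[n]$ is an $m$-tuple $(x_1,\dots,x_m)\in[n]^m$ (entries not necessarily distinct) satisfying the equation; given a 2-coloring of $[n]$, it is monochromatic if all $x_i$ have the same color. The 2-color Rado number of $L(m,a)$ is the least positive integer $n$ such that every 2-coloring of $[n]$ admits a monochromatic solution of $L(m,a)$ in $[n]$. $C(m,a)$ denotes $\left\lceil \frac{m-1}{a}\left\lceil \frac{m-1}{a}\right\rceil\right\rceil$. *)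

(* Defs.v *)
From mathcomp Require Import all_boot.
Set Implicit Arguments. Unset Strict Implicit. Unset Printing Implicit Defensive.

Definition ceil_div (p q : nat) : nat := (p + q - 1) %/ q.

(* C(m,a) = ceil( (m-1)/a * ceil((m-1)/a) ) = ceil( (m-1)*ceil((m-1)/a) / a ) *)
Definition C_ma (m a : nat) : nat := ceil_div ((m - 1) * ceil_div (m - 1) a) a.

(* An m-tuple (x_1,...,x_m) is represented by x : nat -> nat with
   x_k = x (k-1) for k = 1..m (values of x at indices >= m are irrelevant).
   It solves L(m,a) iff x_1 + ... + x_{m-1} = a * x_m. *)
Definition is_solution (m a : nat) (x : nat -> nat) : Prop :=
  \sum_(i < m.-1) x i = a * x m.-1.

Definition in_range (n m : nat) (x : nat -> nat) : Prop :=
  forall i, i < m -> 1 <= x i <= n.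

(* a 2-coloring of [n] is a function c : nat -> bool (values outside [n]
   irrelevant); monochromatic: all entries get the same colour *)
Definition monochromatic (m : nat) (c : nat -> bool) (x : nat -> nat) : Prop :=
  forall i j, i < m -> j < m -> c (x i) = c (x j).

Definition rado_property (m a n : nat) : Prop :=
  forall c : nat -> bool, exists x : nat -> nat,
    [/\ in_range n m x, is_solution m a x & monochromatic m c x].

Definition is_rado_number (m a n : nat) : Prop :=
  0 < n /\ rado_property m a n /\ (forall k, 0 < k < n -> ~ rado_property m a k).

(* Main.v *)
Require Import Defs.
From mathcomp Require Import all_boot.
From mathcomp Require Import zify.
From Stdlib Require Import Classical.

Set Implicit Arguments. Unset Strict Implicit. Unset Printing Implicit Defensive.

Inductive sumk (S : nat -> Prop) : nat -> nat -> Prop :=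
| sumk0 : sumk S 0 0
| sumkS q s v : sumk S q s -> S v -> sumk S q.+1 (s + v).

Lemma sumk_fun S q s : sumk S q s ->
  exists x : nat -> nat, (forall i, i < q -> S (x i)) /\ \sum_(i < q) x i = s.
Proof.
elim=> [|q' s' v _ [x [Hx Hs]] Sv].
  by exists (fun _ => 0); split=> //; rewrite big_ord0.
exists (fun i => if i == q' then v else x i); split.
  move=> i; rewrite ltnS leq_eqVlt; case: eqP => [->|_] //= /Hx //.
rewrite big_ord_recr /= eqxx; congr (_ + _); rewrite -Hs.
by apply: eq_bigr => i _; rewrite (ltn_eqF (ltn_ord i)).
Qed.

Lemma sumk_eq S p s p' s' : p = p' -> s = s' -> sumk S p s -> sumk S p' s'.
Proof. by move=> -> ->. Qed.

Lemma sumk_add S p s q r : sumk S p s -> sumk S q r -> sumk S (p + q) (s + r).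
Proof.
move=> Hp; elim=> [|q' r' v _ IH Sv]; first by rewrite !addn0.
by rewrite addnS addnA; apply: sumkS.
Qed.

Lemma sumk_rep S q v : S v -> sumk S q (q * v).
Proof.
move=> Sv; elim: q => [|q IH]; first exact: sumk0.
by rewrite mulSnr; apply: sumkS.
Qed.

Lemma sumk_int S L H q s : (forall v, L <= v <= H -> S v) ->
  q * L <= s <= q * H -> sumk S q s.
Proof.
move=> HS; elim: q s => [|q IH] s.
  by rewrite !mul0n => /andP [_]; rewrite leqn0 => /eqP ->; apply: sumk0.
move=> /andP [h1 h2].
case: (leqP (s - q * L) H) => hc.
  have -> : s = q * L + (s - q * L) by lia.
  apply: sumkS; first by apply: IH; rewrite leqnn /=; nia.
  apply: HS; rewrite hc andbT; nia.
have -> : s = (s - H) + H by lia.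
apply: sumkS; last by apply: HS; rewrite leqnn andbT; nia.
apply: IH; apply/andP; split; nia.
Qed.

Lemma ceil_div_spec p q : 0 < q -> p <= q * ceil_div p q < p + q.
Proof.
move=> q0; rewrite /ceil_div.
have := divn_eq (p + q - 1) q. have := ltn_pmod (p + q - 1) q0.
set d := _ %/ _; set r := _ %% _. move=> h1 h2. apply/andP; split; nia.
Qed.

Lemma jsel a k y U : 1 <= a -> a <= k -> 2 <= U -> k <= a * y ->
  y <= (k - a + 1) * U ->
  exists j, [/\ j < a, k - j <= (a - j) * y & (a - j) * y <= (k - j) * U].
Proof.
move=> a1 ak U2 ky yU.
suff: forall d i, i + d = a - 1 -> k - i <= (a - i) * y ->
  exists j, [/\ j < a, k - j <= (a - j) * y & (a - j) * y <= (k - j) * U].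
  by move=> /(_ (a - 1) 0); apply; [lia | rewrite !subn0].
elim=> [|d IH] i hi hk.
  exists i; split; [lia | done |].
  have -> : a - i = 1 by lia. have -> : k - i = k - a + 1 by lia. by rewrite mul1n.
case: (leqP (k - i.+1) ((a - i.+1) * y)) => h.
  by apply: (IH i.+1) => //; lia.
exists i; split; [lia | done |].
have e1 : a - i = (a - i.+1).+1 by lia.
have e2 : k - i = (k - i.+1).+1 by lia.
have p1 : 1 <= a - i.+1 by lia.
move: h; rewrite e1 e2; set A := a - i.+1; set K := k - i.+1.
move=> h. have yK : y < K by nia. nia.
Qed.

Lemma neqb (x y : bool) : x != y -> x = ~~ y.
Proof. by case: x; case: y. Qed.

Lemma key a K w t : 3 <= a -> 2 <= w -> a*t < K + 2*a -> a <= K -> a*t + K*(w+1) <= a*((K+1)*w).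
Proof. move=> h1 h2 h3 h4. have : 2*K*w <= (a-1)*K*w by rewrite -!mulnA leq_mul2r; lia. nia. Qed.

Definition col (C : nat) (c : nat -> bool) (b : bool) v := 1 <= v <= C /\ c v = b.

Lemma sol_of m a C c b y : 1 <= y <= C -> c y = b ->
  sumk (col C c b) m.-1 (a * y) ->
  exists x : nat -> nat,
    [/\ in_range C m x, is_solution m a x & monochromatic m c x].
Proof.
move=> hy cy /sumk_fun [x [Hx Hs]].
have mono : forall i, i < m -> 1 <= (fun i => if i < m.-1 then x i else y) i <= C
   /\ c ((fun i => if i < m.-1 then x i else y) i) = b.
  by move=> i _ /=; case: ifP => [/Hx []|_] //.
exists (fun i => if i < m.-1 then x i else y); split.
- by move=> i /mono [].
- rewrite /is_solution ltnn -Hs; apply: eq_bigr => i _; by rewrite ltn_ord.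
- move=> i j /mono [_ ->] /mono [_ ->] //.
Qed.

Lemma sum_ge k L (x : nat -> nat) : (forall i, i < k -> L <= x i) ->
  k * L <= \sum_(i < k) x i.
Proof.
move=> H; have <- : \sum_(i < k) L = k * L by rewrite sum_nat_const card_ord.
by apply: leq_sum => i _; apply: H.
Qed.

Lemma sum_le k L (x : nat -> nat) : (forall i, i < k -> x i <= L) ->
  \sum_(i < k) x i <= k * L.
Proof.
move=> H; have <- : \sum_(i < k) L = k * L by rewrite sum_nat_const card_ord.
by apply: leq_sum => i _; apply: H.
Qed.

Theorem theorem1 (a m : nat) :
  3 <= a -> 2 * a ^ 2 - a + 2 <= m -> is_rado_number m a (C_ma m a).
Proof.
move=> a3 hm.
set k := m.-1.
have mk : m = k.+1 by rewrite /k; lia.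
have hk : 2 * a * a - a + 1 <= k by rewrite /k; rewrite expnS expn1 in hm; lia.
have ak : 2 * a <= k by nia.
set t := ceil_div k a.
have ht : k <= a * t < k + a by apply: ceil_div_spec; lia.
set C := C_ma m a.
have hC : k * t <= a * C < k * t + a.
  rewrite /C /C_ma -/k -/t subn1 -/k; apply: ceil_div_spec; lia.
have t2a : 2 * a <= t by nia.
have C2k : 2 * k <= C by nia.
split; first lia.
split; last first.
  move=> k' /andP [k0 kC] Hr.
  have [x [Hin Hsol Hmono]] := Hr (fun v => v < t).
  rewrite /is_solution -/k in Hsol.
  have hxk := Hin k ltac:(lia).
  case: (ltnP (x k) t) => hy.
  - have hall : forall i, i < k -> 1 <= x i.
      by move=> i ik; have /andP [] := Hin i ltac:(lia).
    have := sum_ge hall; rewrite Hsol; nia.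
  - have hall : forall i, i < k -> t <= x i.
      move=> i ik; have := Hmono i k ltac:(lia) ltac:(lia).
      rewrite /= [x k < t]ltnNge hy /=; by case: (ltnP (x i) t).
    have := sum_ge hall; rewrite Hsol; nia.
move=> c; apply: NNPP => Hno.
have sol : forall b y, 1 <= y <= C -> c y = b -> sumk (col C c b) k (a * y) -> False.
  by move=> b y h1 h2 h3; apply: Hno; apply: (sol_of h1 h2); rewrite -/k.
set b := c 1.
set n := k - a + 1.
have hn : n = k - a + 1 by [].
clearbody n.
have cn : c n != b.
  apply/negP => /eqP cn; apply: (sol b n); [lia | done |].
  apply: (sumk_eq (p := (a - 1) + n) (s := (a - 1) * n + n * 1)); [lia | nia |].
  apply: sumk_add; apply: sumk_rep; split=> //; lia.
have nC : 2 * n <= C by lia.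
have nt : t + 1 <= n by nia.
case: (boolP (c 2 == b)) => c2; last first.
  have cn1 : c (n + 1) = b.
    case: (boolP (c (n + 1) == b)) => [/eqP//|cn1]; exfalso.
    apply: (sol (~~ b) (n + 1)); [lia | exact: neqb |].
    apply: (sumk_eq (p := (a - 2) + (n + 1)) (s := (a - 2) * (n + 1) + (n + 1) * 2)); [lia | nia |].
    apply: sumk_add; apply: sumk_rep; (split; [lia|]).
      exact: neqb.
    exact: neqb.
  have c2n : c (2 * n) = b.
    case: (boolP (c (2 * n) == b)) => [/eqP//|cn2]; exfalso.
    apply: (sol (~~ b) (2 * n)); [lia | exact: neqb |].
    apply: (sumk_eq (p := (a - 1) + n) (s := (a - 1) * (2 * n) + n * 2)); [lia | nia |].
    apply: sumk_add; apply: sumk_rep; (split; [lia|]).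
      exact: neqb.
    exact: neqb.
  apply: (sol b (2 * n)); [lia | done |].
  apply: (sumk_eq (p := (a - 1) + (n - 1) + 1)
                  (s := (a - 1) * (2 * n) + (n - 1) * 1 + 1 * (n + 1))); [lia | nia |].
  apply: sumk_add; [apply: sumk_add|]; apply: sumk_rep; (split; [lia|done]).
have exP : exists v, (0 < v) && (c v != b) by exists n; rewrite cn andbT; lia.
case: (ex_minnP exP) => u /andP [u0 cu] umin.
have below : forall v, 0 < v < u -> c v = b.
  move=> v /andP [v0 vu]; case: (boolP (c v == b)) => [/eqP//|cv].
  by have := umin v; rewrite v0 cv => /(_ isT); lia.
have un : u <= n by apply: umin; rewrite cn andbT; lia.
have u1 : u != 1 by apply/eqP => u1; move: cu; rewrite u1 eqxx.
have u2 : u != 2 by apply/eqP => u2; move: cu; rewrite u2 c2.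
have u3 : 3 <= u by lia.
set N := n * (u - 1).
have hN : N = n * (u - 1) by [].
clearbody N.
have tN : t <= N.
  rewrite hN; apply: leq_trans (_ : n * 1 <= _); first by rewrite muln1; lia.
  by rewrite leq_mul2l; apply/orP; right; lia.
have keyi : a * t + (k - a) * u <= a * N.
  have := @key a (k - a) (u - 1) t ltac:(lia) ltac:(lia) ltac:(lia) ltac:(lia).
  have -> : k - a + 1 = n by lia.
  have -> : u - 1 + 1 = u by lia.
  by rewrite hN.
have blue : forall y, t <= y <= N -> y <= C -> c y = ~~ b.
  move=> y /andP [ty yN] yC; apply: neqb; apply/negP => /eqP cy.
  have ky : k <= a * y by apply: leq_trans (_ : a * t <= _); [lia | rewrite leq_mul2l ty orbT].
  have yN' : y <= (k - a + 1) * (u - 1) by rewrite -hn -hN.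
  have [j [ja hj1 hj2]] := @jsel a k y (u - 1) ltac:(lia) ltac:(lia) ltac:(lia) ky yN'.
  apply: (sol b y); [lia | done |].
  apply: (sumk_eq (p := j + (k - j)) (s := j * y + (a - j) * y)); [lia | by rewrite -mulnDl subnKC; lia |].
  apply: sumk_add; first by apply: sumk_rep; split; [lia | done].
  apply: (@sumk_int _ 1 (u - 1)); last by rewrite muln1 hj1 hj2.
  move=> v hv; split; first lia.
  apply: below; lia.
case: (leqP C N) => hCN.
  apply: (sol (~~ b) C); [lia | apply: blue; lia |].
  apply: (@sumk_int _ t t.+1); last by rewrite mulnS; lia.
  move=> v hv; split; first lia; apply: blue; lia.
apply: (sol (~~ b) N); [lia | apply: blue; lia |].
apply: (sumk_eq (p := (k - a) + a) (s := (k - a) * u + (a * N - (k - a) * u))); [lia | lia |].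
apply: sumk_add; first by apply: sumk_rep; split; [lia | exact: neqb].
apply: (@sumk_int _ t N); last by lia.
move=> v hv; split; first lia; apply: blue; lia.
Qed.
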